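(* Let $d \geq 4$ be an integer and for a positive integer $m$ let $\omega_m := e^{2\pi i/m}$. Define vectors in $\mathbb{C}^d$ by $$v_1 := \Big(\tfrac{1}{\sqrt 2}, \tfrac{1}{\sqrt{2d-2}}, \ldots, \tfrac{1}{\sqrt{2d-2}}\Big)^T,\qquad v_2 := \Big(\tfrac{1}{\sqrt 2}, \tfrac{-1}{\sqrt{2d-2}}, \ldots, \tfrac{-1}{\sqrt{2d-2}}\Big)^T,$$ and, for $j = 1, \ldots, d-2$, $$v_{j+2} := \tfrac{1}{\sqrt{d-1}}\big(0, \omega_{d-1}^{0}, \omega_{d-1}^{j}, \omega_{d-1}^{2j}, \ldots, \omega_{d-1}^{(d-2)j}\big)^T.$$ Set $\lambda_1 := 1$, $\lambda_2 := -1$, $\lambda_{j+2} := \omega_{d-2}^j$ for $j = 1,\ldots,d-2$, and $U := \sum_{j=1}^d \lambda_j v_j v_j^*$. Then $U$ is a unitary $d\times d$ matrix, every diagonal entry of $U$ equals $0$, and every off-diagonal entry of $U$ is nonzero. *)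

(* Defs.v *)
(* complex numbers are modelled by algC (algebraic complex numbers). *)
From HB Require Import structures.
From mathcomp Require Import all_boot all_order all_algebra all_field.
From mathcomp Require Import sesquilinear spectral.
Set Implicit Arguments. Unset Strict Implicit. Unset Printing Implicit Defensive.
Import Order.TTheory GRing.Theory Num.Theory.
Local Open Scope ring_scope.

(* omega m = e^{2 pi i / m}.  In algC, m.-root (-1) is the m-th root of -1
   with minimal non-negative argument, i.e. e^{i pi / m} (for m >= 1);
   its square is e^{2 pi i / m}. *)
Definition omega (m : nat) : algC := (m.-root (-1)) ^+ 2.

(* Vectors v_1, ..., v_d as column vectors, indexed 0-based:
   vvec d 0 = v_1, vvec d 1 = v_2, vvec d (j+1) = v_{j+2} for j = 1..d-2.
   Coordinates are also 0-based: coordinate k (0 <= k < d) is the (k+1)-th entry. *)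
Definition vvec (d : nat) (i : 'I_d) : 'cV[algC]_d :=
  \col_(k < d)
    if (i : nat) == 0%N then
      (if (k : nat) == 0%N then (sqrtC 2)^-1 else (sqrtC (2 * d%:R - 2))^-1)
    else if (i : nat) == 1%N then
      (if (k : nat) == 0%N then (sqrtC 2)^-1 else - (sqrtC (2 * d%:R - 2))^-1)
    else
      (if (k : nat) == 0%N then 0
       else (sqrtC ((d - 1)%:R))^-1 * omega (d - 1) ^+ (((k : nat) - 1) * ((i : nat) - 1))).

Definition lam (d : nat) (i : 'I_d) : algC :=
  if (i : nat) == 0%N then 1
  else if (i : nat) == 1%N then -1
  else omega (d - 2) ^+ ((i : nat) - 1).

Definition Umx (d : nat) : 'M[algC]_d :=
  \sum_(i < d) lam i *: (vvec i *m (map_mx Num.conj (vvec i))^T).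

(* Main.v *)
Require Import Defs.
From HB Require Import structures.
From mathcomp Require Import all_boot all_order all_algebra all_field.
From mathcomp Require Import sesquilinear spectral.
From mathcomp Require Import ring lra zify.
Import Order.TTheory GRing.Theory Num.Theory.
Local Open Scope ring_scope.

Lemma step_ineq (R: realFieldType) (x t c s : R) : x^+2 + t^+2 = 1 -> c^+2 + s^+2 = 1 -> 0 <= t -> 0 <= s -> x <= c -> c < 1 -> 0 < (c-1)*x + s*t /\ 0 <= c*t - s*x.
Proof.
move=> h1 h2 ht hs hxc hc; split.
  have [hx|hx|hx] := ltrgtP x 0.
  - have : 0 < (c-1)*x by nra.
    have : 0 <= s * t by nra.
    lra.
  - have hts : s <= t.
      have : s^+2 <= t^+2 by nra.
      nra.
    nra.
  - rewrite hx in h1 hxc *.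
    have ht1 : t = 1 by nra.
    rewrite ht1; nra.
have [hx|hx] := lerP x 0.
  have [hc0|hc0] := lerP 0 c.
    nra.
  have hts : t <= s by nra.
  nra.
have hts : s <= t by nra.
nra.
Qed.

Lemma stepC (w a : algC) : 'Re w ^+2 + 'Im w ^+ 2 = 1 -> 'Re a ^+2 + 'Im a ^+2 = 1 ->
  0 <= 'Im w -> 0 <= 'Im a -> 'Re w <= 'Re a -> 'Re a < 1 ->
  'Re w < 'Re (w * a^*) /\ 0 <= 'Im (w * a^*).
Proof.
move=> h1 h2 h3 h4 h5 h6.
have Ew : w * a^* = ('Re w * 'Re a + 'Im w * 'Im a) + 'i * ('Im w * 'Re a - 'Re w * 'Im a).
  rewrite {1}[w]algCrect [a^*]algCrect Re_conj Im_conj.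
  rewrite mulC_rect; congr (_ + 'i * _); ring.
have RR : forall x : algC, x \is Num.real -> forall y : algC, y \is Num.real -> x * y \is Num.real.
  by move=> x hx y hy; rewrite rpredM.
rewrite Ew Re_rect ?Im_rect ?rpredD ?rpredB ?rpredN ?RR ?Creal_Re ?Creal_Im //.
pose X : algR := in_algR (Creal_Re w).
pose T : algR := in_algR (Creal_Im w).
pose Cc : algR := in_algR (Creal_Re a).
pose S : algR := in_algR (Creal_Im a).
have := @step_ineq algR X T Cc S.
case.
- by apply: val_inj => /=; rewrite -!expr2.
- by apply: val_inj => /=; rewrite -!expr2.
- exact h3.
- exact h4.
- exact h5.
- exact h6.
move=> H1 H2; split.
  have : 0 < val ((Cc - 1) * X + S * T) by exact H1.
  rewrite rmorphD !rmorphM rmorphB rmorph1 /= => H.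
  rewrite -subr_gt0.
  have -> : 'Re w * 'Re a + 'Im w * 'Im a - 'Re w = ('Re a - 1) * 'Re w + 'Im a * 'Im w by ring.
  exact H.
have : 0 <= val (Cc * T - S * X) by exact H2.
rewrite rmorphB !rmorphM /= => H.
have -> : 'Im w * 'Re a - 'Re w * 'Im a = 'Re a * 'Im w - 'Im a * 'Re w by ring.
exact H.
Qed.
Lemma unit_root_norm (y : algC) N : (0 < N)%N -> y ^+ N = 1 -> `|y| = 1.
Proof.
move=> N0 h; have := congr1 Num.norm h; rewrite normrX normr1 => /eqP.
by rewrite pexpr_eq1 // => /eqP.
Qed.

Lemma norm1_ReIm (y : algC) : `|y| = 1 -> 'Re y ^+ 2 + 'Im y ^+ 2 = 1.
Proof. by move=> h; rewrite -normC2_Re_Im h expr1n. Qed.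

Lemma walk (y a : algC) (N : nat) : (0 < N)%N -> a ^+ N = 1 -> a != 1 ->
  0 <= 'Im a -> `|y| = 1 -> 0 <= 'Im y ->
  (forall j, (j < N)%N -> 'Re (y * a^* ^+ j) <= 'Re a) -> False.
Proof.
move=> N0 aN a1 Ia ny Iy H.
have na : `|a| = 1 := @unit_root_norm a N N0 aN.
have Ra1 : 'Re a < 1.
  have hr : 'Re a \is Num.real := Creal_Re a.
  rewrite real_ltNge ?real1 //; apply/negP => h.
  have h2 := leif_normC_Re_Creal a.
  have e : `|'Re a| = 1.
    apply/le_anti; rewrite -{1}na h2.1 /=.
    by rewrite (le_trans h) // real_ler_norm.
  have ar : a \is Num.real by rewrite -h2.2 e na.
  have ea : 'Re a = a by apply/Creal_ReP.
  have : 'Re a = 1.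
    apply/le_anti; rewrite h andbT -e; exact: real_ler_norm.
  by rewrite ea => /eqP; rewrite (negbTE a1).
pose yj j := y * a^* ^+ j.
have nyj : forall j, `|yj j| = 1.
  by move=> j; rewrite /yj normrM normrX norm_conjC na expr1n mulr1.
have step : forall j, (j < N)%N -> 0 <= 'Im (yj j) ->
    'Re (yj j) < 'Re (yj j.+1) /\ 0 <= 'Im (yj j.+1).
  move=> j jN hI; rewrite /yj exprSr mulrA.
  apply: stepC => //.
  - exact: norm1_ReIm (nyj j).
  - exact: norm1_ReIm na.
  - exact: H.
have Q : forall j, (j < N)%N -> 0 <= 'Im (yj j) /\ 'Re (yj 1) <= 'Re (yj j.+1).
  elim=> [|j IH] jN.
    by rewrite /yj expr0 mulr1; split.
  have [IH1 IH2] := IH (ltnW jN).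
  have [s1 s2] := step j (ltnW jN) IH1.
  have [s3 s4] := step j.+1 jN s2.
  split => //; exact: (le_trans IH2 (ltW s3)).
have [q1 q2] := Q (N.-1) (ltac:(by rewrite ltn_predL)).
have [s1 _] := step 0%N N0 (ltac:(by rewrite /yj expr0 mulr1)).
rewrite (prednK N0) /yj -[a^* ^+ N]rmorphXn aN rmorph1 mulr1 in q2.
have : 'Re (yj 0%N) < 'Re y := lt_le_trans s1 q2.
by rewrite /yj expr0 mulr1 ltxx.
Qed.
Lemma max_prim (N : nat) (b : algC) : (1 < N)%N -> b ^+ N = 1 -> b != 1 ->
  (forall y, y ^+ N = 1 -> y != 1 -> 'Re y <= 'Re b) -> N.-primitive_root b.
Proof.
move=> N1 bN b1 Hmax; have N0 : (0 < N)%N := ltnW N1.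
have nb := @unit_root_norm b N N0 bN.
have Ecj : forall x : algC, `|x| = 1 -> x^* * x = 1.
  by move=> x hx; rewrite mulrC -normCK hx expr1n.
have bc : b^* = b ^+ N.-1.
  have b0 : b != 0 by rewrite -normr_eq0 nb oner_neq0.
  apply: (mulfI b0); rewrite mulrC Ecj // -exprS prednK //.
have [a [aN [a1 [Ia [Rea [[ka Ka] [kc Kc]]]]]]] : exists a : algC,
    a ^+ N = 1 /\ a != 1 /\ 0 <= 'Im a /\ 'Re a = 'Re b /\
    (exists k, a = b ^+ k) /\ (exists k, a^* = b ^+ k).
  have hr : 'Im b \is Num.real := Creal_Im b.
  case/orP: (real_leVge (real0 _) hr) => hI.
    exists b; split => //; split => //; split => //; split => //; split.
      by exists 1%N; rewrite expr1.
    by exists N.-1.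
  exists b^*; split; first by rewrite -rmorphXn bN rmorph1.
  split; first by apply: contra b1 => /eqP h; apply/eqP; rewrite -[b]conjCK h rmorph1.
  split; first by rewrite Im_conj oppr_ge0.
  split; first by rewrite Re_conj.
  split; first by exists N.-1.
  by exists 1%N; rewrite conjCK expr1.
have na := @unit_root_norm a N N0 aN.
have up : forall y, y ^+ N = 1 -> 0 <= 'Im y -> exists j, y = a ^+ j.
  move=> y yN Iy.
  case: (boolP [exists j : 'I_N, ~~ ('Re (y * a^* ^+ j) <= 'Re a)]).
    move=> /existsP [j hj].
    have wN : (y * a^* ^+ j) ^+ N = 1.
      by rewrite exprMn -exprM mulnC exprM -rmorphXn aN rmorph1 expr1n mulr1.
    case: (eqVneq (y * a^* ^+ j) 1) => hw.
      exists j; rewrite -[y]mulr1 -(expr1n _ j) -(Ecj a na) exprMn mulrA hw mul1r //.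
    by move: hj; rewrite Rea (Hmax _ wN hw).
  move=> /existsPn hall; exfalso.
  apply: (@walk y a N N0 aN a1 Ia (@unit_root_norm y N N0 yN) Iy).
  move=> j jN; have := hall (Ordinal jN); by rewrite negbK.
have pw : forall y, y ^+ N = 1 -> exists k, y = b ^+ k.
  move=> y yN; have hr : 'Im y \is Num.real := Creal_Im y.
  case/orP: (real_leVge (real0 _) hr) => hI.
    have [j ->] := up y yN hI.
    by exists (ka * j)%N; rewrite Ka exprM.
  have [j Hj] := up y^* (ltac:(by rewrite -rmorphXn yN rmorph1)) (ltac:(by rewrite Im_conj oppr_ge0)).
  exists (kc * j)%N; by rewrite -[y]conjCK Hj rmorphXn exprM -Kc.
have [P PP] := C_prim_root_exists N0.
have [k Pk] := pw P (prim_expr_order PP).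
have [m Pm mN] := prim_order_exists N0 bN.
suff emN : m = N by rewrite -emN.
apply/eqP; rewrite eqn_dvd mN /=.
rewrite (prim_order_dvd PP) Pk -exprM mulnC exprM (prim_expr_order Pm) expr1n //.
Qed.
Lemma seq_max (s : seq algC) : s != [::] ->
  exists2 x, x \in s & forall y, y \in s -> 'Re y <= 'Re x.
Proof.
case: s => [//|h t] _; elim: t h => [|h' t IH] h.
  by exists h; rewrite ?mem_seq1 // => y; rewrite mem_seq1 => /eqP ->.
have [x hx Hx] := IH h'.
case/orP: (real_leVge (Creal_Re h) (Creal_Re x)) => H.
  exists x; first by rewrite inE hx orbT.
  by move=> y; rewrite inE => /orP [/eqP ->|/Hx].
exists h; first by rewrite inE eqxx.
move=> y; rewrite inE => /orP [/eqP ->//|/Hx hy]; exact: le_trans hy H.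
Qed.

Lemma omega_prim m : (1 < m)%N -> m.-primitive_root (omega m).
Proof.
move=> m1; have m0 := ltnW m1.
pose z := m.-root (-1 : algC).
have zm : z ^+ m = -1 := rootCK m0 (-1).
have zmax : forall y, y ^+ m = -1 -> 'Re y <= 'Re z.
  move=> y ym; case/orP: (real_leVge (real0 _) (Creal_Im y)) => hI.
    exact: rootC_Re_max.
  rewrite -Re_conj; apply: rootC_Re_max => //.
    by rewrite -rmorphXn ym rmorphN1.
  by rewrite Im_conj oppr_ge0.
pose N := (m * 2)%N.
have N1 : (1 < N)%N by rewrite /N muln2 -addnn (leq_trans m1) // leq_addr.
have N0 : (0 < N)%N := ltnW N1.
have two0 : (2%:R : algC) != 0 by rewrite pnatr_eq0.
have n1m1 : (1 : algC) != -1.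
  apply: contra two0 => /eqP h; apply/eqP.
  by rewrite -[2%:R]/(1 + 1 : algC) {2}h subrr.
have zN : z ^+ N = 1 by rewrite /N exprM zm sqrrN expr1n.
have z1 : z != 1.
  by apply: contra n1m1 => /eqP h; rewrite -zm h expr1n.
have [P PP] := C_prim_root_exists N0.
pose s := [seq P ^+ i.+1 | i <- iota 0 N.-1].
have sne : s != [::].
  rewrite /s; case E: (N.-1) => [|k] //; by move: N1; rewrite -(prednK N0) E.
have [b bs Hb] := seq_max s sne.
have [i ii Eb] := mapP bs; subst b.
have iN : (i.+1 < N)%N by move: ii; rewrite mem_iota add0n => /andP[_ h]; rewrite -(prednK N0) ltnS.
have bN : (P ^+ i.+1) ^+ N = 1 by rewrite -exprM mulnC exprM (prim_expr_order PP) expr1n.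
have b1 : P ^+ i.+1 != 1.
  rewrite -(expr0 P) (eq_prim_root_expr PP) mod0n modn_small //.
have Hy : forall y, y ^+ N = 1 -> y != 1 -> 'Re y <= 'Re (P ^+ i.+1).
  move=> y yN y1; have [k Hk] := prim_rootP PP yN.
  apply: Hb; rewrite Hk; case: k Hk => [[|k] kN] /= Hk.
    by move: y1; rewrite Hk expr0 eqxx.
  apply: map_f; rewrite mem_iota add0n /= -ltnS (prednK N0) //.
have bP := @max_prim N _ N1 bN b1 Hy.
have bm : (P ^+ i.+1) ^+ m = -1.
  have : ((P ^+ i.+1) ^+ m) ^+ 2 == 1 by rewrite -exprM -/N bN.
  rewrite sqrf_eq1 => /orP [|/eqP //].
  rewrite -(prim_order_dvd bP) => /(dvdn_leq m0); rewrite /N; lia.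
have zP : N.-primitive_root z.
  apply: max_prim => // y yN y1; exact: le_trans (Hy y yN y1) (zmax _ bm).
have := dvdn_prim_root zP (dvdn_mulr 2 (dvdnn m)).
by rewrite /N mulKn.
Qed.
Definition ve (d i k : nat) : algC :=
    if i == 0%N then
      (if k == 0%N then (sqrtC 2)^-1 else (sqrtC (2 * d%:R - 2))^-1)
    else if i == 1%N then
      (if k == 0%N then (sqrtC 2)^-1 else - (sqrtC (2 * d%:R - 2))^-1)
    else
      (if k == 0%N then 0
       else (sqrtC ((d - 1)%:R))^-1 * omega (d - 1) ^+ ((k - 1) * (i - 1))).

Definition laml (d i : nat) : algC :=
  if i == 0%N then 1
  else if i == 1%N then -1
  else omega (d - 2) ^+ (i - 1).

Lemma vvecE d (i k : 'I_d) : vvec i k 0 = ve d i k.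
Proof. by rewrite mxE. Qed.

Lemma lamE d (i : 'I_d) : lam i = laml d i.
Proof. by []. Qed.

Definition al : algC := (sqrtC 2)^-1.
Definition be (n : nat) : algC := (sqrtC (2 * (n.+2)%:R - 2))^-1.
Definition ga (n : nat) : algC := (sqrtC ((n.+1)%:R))^-1.

Lemma ve00 n : ve n.+2 0 0 = al. Proof. by []. Qed.
Lemma ve0S n k : ve n.+2 0 k.+1 = be n. Proof. by []. Qed.
Lemma ve10 n : ve n.+2 1 0 = al. Proof. by []. Qed.
Lemma ve1S n k : ve n.+2 1 k.+1 = - be n. Proof. by []. Qed.
Lemma veS0 n i : ve n.+2 i.+2 0 = 0. Proof. by []. Qed.
Lemma veSS n i k : ve n.+2 i.+2 k.+1 = ga n * omega n.+1 ^+ (k * i.+1).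
Proof. by rewrite /ve /= !subn1 /=. Qed.
Lemma lam0 n : laml n.+2 0 = 1. Proof. by []. Qed.
Lemma lam1 n : laml n.+2 1 = -1. Proof. by []. Qed.
Lemma lamS n i : laml n.+2 i.+2 = omega n ^+ i.+1.
Proof. by rewrite /laml /= !subSS !subn0. Qed.

Lemma ge0_inv_sqrt (x : algC) : 0 <= x -> 0 <= (sqrtC x)^-1.
Proof. by move=> h; rewrite invr_ge0 sqrtC_ge0. Qed.

Lemma conj_inv_sqrt (x : algC) : 0 <= x -> ((sqrtC x)^-1)^* = (sqrtC x)^-1.
Proof. by move=> h; rewrite conj_Creal // ger0_real // ge0_inv_sqrt. Qed.

Lemma sq_inv_sqrt (x : algC) : (sqrtC x)^-1 ^+ 2 = x^-1.
Proof. by rewrite exprVn sqrtCK. Qed.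

Lemma al_conj : al^* = al. Proof. by rewrite conj_inv_sqrt // ler0n. Qed.
Lemma be_conj n : (be n)^* = be n.
Proof.
rewrite conj_inv_sqrt //.
have -> : 2 * (n.+2)%:R - 2 = 2 * (n.+1)%:R :> algC by rewrite !mulrSr; ring.
by rewrite mulr_ge0 ?ler0n.
Qed.
Lemma mbe_conj n : (- be n)^* = - be n.
Proof.
rewrite conj_Creal // rpredN ger0_real // ge0_inv_sqrt //.
have -> : 2 * (n.+2)%:R - 2 = 2 * (n.+1)%:R :> algC by rewrite !mulrSr; ring.
by rewrite mulr_ge0 ?ler0n.
Qed.
Lemma ga_conj n : (ga n)^* = ga n. Proof. by rewrite conj_inv_sqrt // ler0n. Qed.

Lemma gaM_conj n (x : algC) : (ga n * x)^* = ga n * x^*.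
Proof. rewrite rmorphM; congr (_ * _); exact: ga_conj. Qed.

Lemma al2 : al ^+ 2 = 2^-1. Proof. exact: sq_inv_sqrt. Qed.
Lemma be2 n : (n.+1)%:R * be n ^+ 2 = 2^-1.
Proof.
rewrite /be sq_inv_sqrt.
have -> : 2 * (n.+2)%:R - 2 = 2 * (n.+1)%:R :> algC by rewrite !mulrSr; ring.
have h : (n.+1)%:R != 0 :> algC by rewrite pnatr_eq0.
have h2 : 2 != 0 :> algC by rewrite pnatr_eq0.
by field; rewrite addrC natr1 pnatr_eq0.
Qed.
Lemma ga2 n : (n.+1)%:R * ga n ^+ 2 = 1.
Proof.
rewrite /ga sq_inv_sqrt mulfV // pnatr_eq0 //.
Qed.
Lemma al_neq0 : al != 0. Proof. by rewrite invr_eq0 sqrtC_eq0 pnatr_eq0. Qed.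
Lemma be_neq0 n : be n != 0.
Proof.
rewrite invr_eq0 sqrtC_eq0.
have -> : 2 * (n.+2)%:R - 2 = 2 * (n.+1)%:R :> algC by rewrite !mulrSr; ring.
by rewrite mulf_eq0 !pnatr_eq0.
Qed.
Lemma ga_neq0 n : ga n != 0. Proof. by rewrite invr_eq0 sqrtC_eq0 pnatr_eq0. Qed.

Lemma geo (x : algC) N : x ^+ N = 1 -> x != 1 -> \sum_(k < N) x ^+ k = 0.
Proof.
move=> h1 h2; have := subrX1 x N; rewrite h1 subrr => /esym /eqP.
by rewrite mulf_eq0 subr_eq0 (negbTE h2) /= => /eqP.
Qed.

Lemma root_conjK (x : algC) N : (0 < N)%N -> x ^+ N = 1 -> x^* * x = 1.
Proof.
move=> N0 h; rewrite mulrC -normCK (@unit_root_norm x N N0 h) expr1n //.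
Qed.

Lemma sum_split2 n (F : nat -> algC) :
  \sum_(i < n.+2) F i = F 0%N + F 1%N + \sum_(i < n) F i.+2.
Proof.
rewrite big_ord_recl big_ord_recl addrA; congr (_ + _ + _).
Qed.

Lemma sum_split1 n (F : nat -> algC) :
  \sum_(i < n.+1) F i = F 0%N + \sum_(i < n) F i.+1.
Proof.
rewrite big_ord_recl; congr (_ + _).
Qed.
Lemma pow_ne1 N (z : algC) a : N.-primitive_root z -> (0 < a < N)%N -> z ^+ a != 1.
Proof.
move=> Pz /andP[a0 aN]; rewrite -(prim_order_dvd Pz); apply/negP => /(dvdn_leq a0).
by rewrite leqNgt aN.
Qed.

Lemma pow_root N (z : algC) a : N.-primitive_root z -> (z ^+ a) ^+ N = 1.
Proof. by move=> Pz; rewrite exprAC (prim_expr_order Pz) expr1n. Qed.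

Lemma fsum N (z : algC) a : N.-primitive_root z -> (0 < a < N)%N ->
  \sum_(k < N) z ^+ (k * a) = 0.
Proof.
move=> Pz ha; under eq_bigr => k _ do rewrite mulnC exprM.
by apply: geo; [exact: pow_root Pz | exact: pow_ne1 Pz ha].
Qed.

Lemma fsumC N (z : algC) a : N.-primitive_root z -> (0 < a < N)%N ->
  \sum_(k < N) (z ^+ (k * a))^* = 0.
Proof. by move=> Pz ha; rewrite -rmorph_sum fsum // rmorph0. Qed.

Lemma fmix N (z : algC) a b : N.-primitive_root z -> (a < N)%N -> (b < N)%N ->
  \sum_(k < N) (z ^+ (k * a))^* * z ^+ (k * b) = (a == b)%:R * N%:R.
Proof.
move=> Pz aN bN; have N0 := prim_order_gt0 Pz.
have za : (z ^+ a)^* * z ^+ a = 1 := @root_conjK _ N N0 (@pow_root N z a Pz).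
under eq_bigr => k _ do rewrite mulnC [(k * b)%N]mulnC !exprM rmorphXn -exprMn.
case: eqVneq => [<-|hab].
  under eq_bigr => k _ do rewrite za expr1n.
  by rewrite sumr_const card_ord mul1r.
rewrite mul0r; apply: geo.
  by rewrite exprMn -rmorphXn !pow_root // rmorph1 mulr1.
apply/negP => /eqP h.
have : z ^+ b = z ^+ a.
  by rewrite -[z ^+ b]mul1r -za [_^* * _]mulrC -mulrA h mulr1.
move/eqP; rewrite (eq_prim_root_expr Pz) !modn_small // => /eqP hba.
by move: hab; rewrite hba eqxx.
Qed.

Lemma ip n (i j : nat) : (1 < n)%N -> (i < n.+2)%N -> (j < n.+2)%N ->
  \sum_(k < n.+2) (ve n.+2 i k)^* * ve n.+2 j k = (i == j)%:R.
Proof.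
move=> n1 hi hj; have Pw : n.+1.-primitive_root (omega n.+1) by apply: omega_prim; rewrite ltnS ltnW.
rewrite (sum_split1 n.+1 (fun k => (ve n.+2 i k)^* * ve n.+2 j k)).
have two : (2 : algC) != 0 by rewrite pnatr_eq0.
case: i hi => [|[|i']] hi; case: j hj => [|[|j']] hj; rewrite /=.
- under eq_bigr => k _ do rewrite ve0S.
  rewrite ve00 sumr_const card_ord -[_ *+ n.+1]mulr_natl al_conj be_conj -!expr2 al2 be2 /=.
  by field.
- under eq_bigr => k _ do rewrite ve0S ve1S.
  rewrite ve00 ve10 sumr_const card_ord -[_ *+ n.+1]mulr_natl al_conj be_conj mulrN -!expr2 al2 mulrN be2.
  by rewrite subrr.
- rewrite ve00 veS0 mulr0 add0r.
  under eq_bigr => k _ do rewrite ve0S veSS be_conj mulrA.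
  by rewrite -mulr_sumr (@fsum n.+1) ?mulr0 //= ltnS -ltnS.
- under eq_bigr => k _ do rewrite ve0S ve1S.
  rewrite ve00 ve10 sumr_const card_ord -[_ *+ n.+1]mulr_natl al_conj mbe_conj mulNr -!expr2 al2 mulrN be2.
  by rewrite subrr.
- under eq_bigr => k _ do rewrite ve1S.
  rewrite ve10 sumr_const card_ord -[_ *+ n.+1]mulr_natl al_conj mbe_conj mulrNN -!expr2 al2 be2.
  by field.
- rewrite ve10 veS0 mulr0 add0r.
  under eq_bigr => k _ do rewrite ve1S veSS mbe_conj mulrA.
  by rewrite -mulr_sumr (@fsum n.+1) ?mulr0 //= ltnS -ltnS.
- rewrite ve00 veS0 rmorph0 mul0r add0r.
  under eq_bigr => k _ do rewrite ve0S veSS gaM_conj mulrC mulrA.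
  by rewrite -mulr_sumr (@fsumC n.+1) ?mulr0 //= ltnS -ltnS.
- rewrite ve10 veS0 rmorph0 mul0r add0r.
  under eq_bigr => k _ do rewrite ve1S veSS gaM_conj mulrC mulrA.
  by rewrite -mulr_sumr (@fsumC n.+1) ?mulr0 //= ltnS -ltnS.
- rewrite veS0 rmorph0 mul0r add0r.
  under eq_bigr => k _ do rewrite !veSS gaM_conj mulrACA.
  rewrite -mulr_sumr (@fmix n.+1) //= -?ltnS // !eqSS.
  case: eqP => _; first by rewrite mul1r -expr2 mulrC ga2.
  by rewrite mul0r mulr0.
Qed.
Lemma conjX (x : algC) j : (x ^+ j)^* = (x^*) ^+ j.
Proof. exact: rmorphXn. Qed.

Lemma pw_conjK N (z : algC) x : N.-primitive_root z -> (z ^+ x)^* * z ^+ x = 1.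
Proof.
move=> Pz; exact: (@root_conjK _ N (prim_order_gt0 Pz) (@pow_root N z x Pz)).
Qed.

Lemma UE n (k l : 'I_n.+2) :
  Umx n.+2 k l = \sum_(i < n.+2) laml n.+2 i * (ve n.+2 i k * (ve n.+2 i l)^*).
Proof.
rewrite /Umx summxE; apply: eq_bigr => i _.
by rewrite !mxE big_ord1 !mxE.
Qed.

Lemma Udiag n (k : 'I_n.+2) : (1 < n)%N -> Umx n.+2 k k = 0.
Proof.
move=> n1; have Pw : n.+1.-primitive_root (omega n.+1).
  by apply: omega_prim; rewrite ltnS ltnW.
have Pq : n.-primitive_root (omega n) by apply: omega_prim.
rewrite UE (sum_split2 n (fun i => laml n.+2 i * (ve n.+2 i k * (ve n.+2 i k)^*))).
case: k => [[|k'] hk] /=.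
  rewrite big1 ?addr0; last by move=> i _; rewrite veS0 mul0r mulr0.
  by rewrite lam0 lam1 ve00 ve10 mul1r mulN1r subrr.
rewrite lam0 lam1 ve0S ve1S be_conj mbe_conj mulrNN mul1r mulN1r subrr add0r.
under eq_bigr => i _ do rewrite lamS veSS gaM_conj mulrACA [_ * _^*]mulrC (@pw_conjK _ _ _ Pw) mulr1 mulrC.
rewrite -mulr_sumr; apply/eqP; rewrite mulf_eq0; apply/orP; right.
under eq_bigr => i _ do rewrite exprS.
rewrite -mulr_sumr geo ?mulr0 //; first exact: prim_expr_order Pq.
by have := @pow_ne1 n _ 1 Pq; rewrite expr1; apply; rewrite n1.
Qed.
Lemma conjM (x y : algC) : (x * y)^* = x^* * y^*.
Proof. exact: rmorphM. Qed.

Lemma term_eq (g q w : algC) (a b i : nat) :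
  q ^+ i.+1 * ((g * w ^+ (a * i.+1)) * (g * w ^+ (b * i.+1))^*) =
  g * g^* * ((q * w ^+ a * (w ^+ b)^*) * (q * w ^+ a * (w ^+ b)^*) ^+ i).
Proof.
rewrite -exprS !exprMn !exprM conjM !conjX; ring.
Qed.

Lemma two_ne0 (x : algC) : x != 0 -> x + x != 0.
Proof. by move=> h; rewrite -mulr2n mulrn_eq0 negb_or h. Qed.

Lemma Uoff n (k l : 'I_n.+2) : (1 < n)%N -> k != l -> Umx n.+2 k l != 0.
Proof.
move=> n1 hkl; have Pw : n.+1.-primitive_root (omega n.+1).
  by apply: omega_prim; rewrite ltnS ltnW.
have Pq : n.-primitive_root (omega n) by apply: omega_prim.
have n0 : (0 < n)%N by rewrite ltnW.
rewrite UE (sum_split2 n (fun i => laml n.+2 i * (ve n.+2 i k * (ve n.+2 i l)^*))).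
case: k hkl => [[|k'] hk]; case: l => [[|l'] hl] //= hkl.
- rewrite big1 ?addr0; last by move=> i _; rewrite veS0 mul0r mulr0.
  rewrite lam0 lam1 ve00 ve10 ve0S ve1S be_conj mbe_conj mul1r mulN1r mulrN opprK.
  by apply: two_ne0; rewrite mulf_neq0 // ?al_neq0 ?be_neq0.
- rewrite big1 ?addr0; last by move=> i _; rewrite veS0 rmorph0 mulr0 mulr0.
  rewrite lam0 lam1 ve00 ve10 ve0S ve1S al_conj mul1r mulN1r mulNr opprK.
  by apply: two_ne0; rewrite mulf_neq0 // ?al_neq0 ?be_neq0.
have kl : k' != l' by move: hkl; rewrite -val_eqE /=.
rewrite lam0 lam1 !ve0S !ve1S be_conj mbe_conj mulrNN mul1r mulN1r subrr add0r.
pose w := omega n.+1; pose q := omega n.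
pose x := q * w ^+ k' * (w ^+ l')^*.
have term : forall i : nat, q ^+ i.+1 * ((ga n * w ^+ (k' * i.+1)) * (ga n * w ^+ (l' * i.+1))^*) = ga n * ga n * (x * x ^+ i).
  move=> i; rewrite term_eq ga_conj //.
under eq_bigr => i _ do rewrite lamS !veSS term.
have q0 : q != 0 by rewrite (prim_root_eq0 Pq) -lt0n.
have w0 : w != 0 by rewrite (prim_root_eq0 Pw).
have x0 : x != 0.
  apply: mulf_neq0; first apply: mulf_neq0 => //; first exact: expf_neq0.
  by rewrite conjC_eq0 expf_neq0.
rewrite -mulr_sumr; apply: mulf_neq0; first by apply: mulf_neq0; exact: ga_neq0.
rewrite -mulr_sumr; apply: mulf_neq0 => //.
apply/negP => /eqP hs.
have := subrX1 x n; rewrite hs mulr0 => /eqP; rewrite subr_eq0 => /eqP xn.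
pose u := w ^+ k' * (w ^+ l')^*.
have un1 : u ^+ n.+1 = 1.
  by rewrite /u exprMn -conjX !pow_root // rmorph1 mulr1.
have un : u ^+ n = 1.
  have qn : q ^+ n = 1 by exact: (prim_expr_order Pq).
  by rewrite -xn /x -mulrA [in RHS]exprMn qn mul1r.
have u1 : u = 1 by rewrite -un1 exprSr un mul1r.
have : w ^+ k' = w ^+ l'.
  by rewrite -[w ^+ k']mulr1 -(@pw_conjK _ _ l' Pw) mulrA -/u u1 mul1r.
move/eqP; rewrite (eq_prim_root_expr Pw) !modn_small ?(negbTE kl) //; by rewrite -ltnS.
Qed.
Definition Vmx n : 'M[algC]_n.+2 := \matrix_(k < n.+2, i < n.+2) ve n.+2 i k.
Definition Dmx n : 'M[algC]_n.+2 := diag_mx (\row_(i < n.+2) laml n.+2 i).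

Lemma Udecomp n :
  Umx n.+2 = Vmx n *m Dmx n *m map_mx Num.conj (Vmx n)^T.
Proof.
apply/matrixP => k l; rewrite UE !mxE /Dmx mul_mx_diag.
apply: eq_bigr => i _; rewrite !mxE; ring.
Qed.

Lemma V_unitary n : (1 < n)%N -> Vmx n \is unitarymx.
Proof.
move=> n1; apply/unitarymxP; apply: mulmx1C.
apply/matrixP => i j; rewrite !mxE.
rewrite -(@ip n i j n1 (ltn_ord i) (ltn_ord j)).
by apply: eq_bigr => k _; rewrite !mxE.
Qed.

Lemma lam_unit n (i : nat) : (1 < n)%N -> (laml n.+2 i) * (laml n.+2 i)^* = 1.
Proof.
move=> n1; case: i => [|[|i]].
- by rewrite lam0 rmorph1 mulr1.
- by rewrite lam1 rmorphN1 mulrNN mulr1.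
have Pq : n.-primitive_root (omega n) by apply: omega_prim.
by rewrite lamS mulrC (@pw_conjK _ _ _ Pq).
Qed.

Lemma D_unitary n : (1 < n)%N -> Dmx n \is unitarymx.
Proof.
move=> n1; apply/unitarymxP; apply/matrixP => i j.
rewrite /Dmx mul_diag_mx !mxE.
case: eqVneq => [<-|hij] /=; first by rewrite mulr1n lam_unit.
by rewrite mulr0n rmorph0 mulr0.
Qed.
Theorem mainTheorem7 (d : nat) (hd : (4 <= d)%N) :
  Umx d \is unitarymx /\
  (forall i : 'I_d, Umx d i i = 0) /\
  (forall i j : 'I_d, i != j -> Umx d i j != 0).
Proof.
case: d hd => [|[|n]] // hd.
have n1 : (1 < n)%N by lia.
split.
  rewrite Udecomp; apply: mul_unitarymx; first apply: mul_unitarymx.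
  - exact: V_unitary.
  - exact: D_unitary.
  - by rewrite trmxC_unitary; exact: V_unitary.
split; first by move=> i; exact: Udiag.
by move=> i j; exact: Uoff.
Qed.
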